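(* Let $P,Q\in\mathbb P_d$ and $x\in\mathbb R$. Let $U_x:=\operatorname{Pol}(P^{x/2}Q^{1/2})$ and $V_x:=\operatorname{Pol}(P^{1/2}Q^{x/2})$. Then $$\operatorname{F}_{P^x}(P,Q)=\operatorname{Tr}\big[P^{1/2}U_xQ^{1/2}\big]=\operatorname{Tr}\big[P^{\frac{1-x}{2}}\sqrt{P^{x/2}QP^{x/2}}\big],\qquad \operatorname{F}_{Q^x}(P,Q)=\operatorname{Tr}\big[P^{1/2}V_xQ^{1/2}\big]=\operatorname{Tr}\big[\sqrt{Q^{x/2}PQ^{x/2}}\,Q^{\frac{1-x}{2}}\big].$$
   Context: $\mathbb P_d$ is the set of $d\times d$ complex positive definite matrices. For an invertible matrix $A$, $\operatorname{Pol}(A):=A(A^*A)^{-1/2}$ is its unitary polar factor. The generalized fidelity is $\operatorname{F}_R(P,Q):=\operatorname{Tr}\big[\sqrt{R^{1/2}PR^{1/2}}\,R^{-1}\sqrt{R^{1/2}QR^{1/2}}\big]$ for $R\in\mathbb P_d$. *)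

(* Defs.v *)
From HB Require Import structures.
From mathcomp Require Import all_boot all_order all_algebra.
From mathcomp Require Import complex.
From mathcomp Require Import boolp reals exp.
Set Implicit Arguments. Unset Strict Implicit. Unset Printing Implicit Defensive.
Import Order.TTheory GRing.Theory Num.Theory.
Local Open Scope ring_scope.
Local Open Scope complex_scope.

Section MatrixFunctions.
Variables (R : realType) (d : nat).
Local Notation C := (complex R).

Definition adjmx (A : 'M[C]_d) : 'M[C]_d := (map_mx conjc A)^T.

Definition unitarymx (U : 'M[C]_d) : Prop := U *m adjmx U = 1%:M.

Definition posdef (P : 'M[C]_d) : Prop :=
  adjmx P = P /\
  forall v : 'cV[C]_d, v != 0 -> 0 < ((map_mx conjc v)^T *m P *m v) 0 0.

Definition pos_spectral (P U : 'M[C]_d) (l : 'rV[R]_d) : Prop :=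
  unitarymx U /\ (forall i, 0 < l 0 i) /\
  P = U *m diag_mx (map_mx (fun t => t%:C) l) *m adjmx U.

(* real power P^x of a positive definite matrix, via its spectral
   decomposition P = U diag(l) U^*, P^x = U diag(l^x) U^*
   (default value 0 when no such decomposition exists). *)
Definition mpow (x : R) (P : 'M[C]_d) : 'M[C]_d :=
  match pselect (exists UL : 'M[C]_d * 'rV[R]_d, pos_spectral P UL.1 UL.2) with
  | left H => let UL := projT1 (cid H) in
      UL.1 *m diag_mx (map_mx (fun t => (powR t x)%:C) UL.2) *m adjmx UL.1
  | right _ => 0
  end.

Definition msqrt (P : 'M[C]_d) : 'M[C]_d := mpow (2^-1) P.

Definition Pol (A : 'M[C]_d) : 'M[C]_d := A *m mpow (- 2^-1) (adjmx A *m A).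

Definition genF (Rm P Q : 'M[C]_d) : C :=
  \tr (msqrt (msqrt Rm *m P *m msqrt Rm) *m invmx Rm
       *m msqrt (msqrt Rm *m Q *m msqrt Rm)).

End MatrixFunctions.

(* Main.v *)
Require Import Defs.
From HB Require Import structures.
From mathcomp Require Import all_boot all_order all_algebra.
From mathcomp Require Import complex.
From mathcomp Require Import boolp reals exp.
From mathcomp Require Import ring lra.
Import Order.TTheory GRing.Theory Num.Theory.
Local Open Scope ring_scope.
Local Open Scope complex_scope.

Lemma half2 (R : realType) : 2^-1 + 2^-1 = 1 :> R. Proof. by field. Qed.

Set Implicit Arguments.
Unset Strict Implicit.
Section Aux.
Variables (R : realType) (d : nat).
Local Notation C := (complex R).
Implicit Types (A B U V : 'M[C]_d) (l m : 'rV[R]_d).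

Definition Df (f : R -> R) l : 'M[C]_d := diag_mx (map_mx (fun t => (f t)%:C) l).

Lemma adjmxM A B : adjmx (A *m B) = adjmx B *m adjmx A.
Proof. by rewrite /adjmx map_mxM trmx_mul. Qed.

Lemma adjmxK A : adjmx (adjmx A) = A.
Proof.
by apply/matrixP => i j; rewrite /adjmx !mxE conjcK.
Qed.

Lemma adjmx1 : adjmx (1%:M : 'M[C]_d) = 1%:M.
Proof. by rewrite /adjmx map_mx1 trmx1. Qed.

Lemma adjDf f l : adjmx (Df f l) = Df f l.
Proof.
apply/matrixP => i j; rewrite /adjmx /Df !mxE.
case: (eqVneq i j) => [->|ne]; first by rewrite ?eqxx !mulr1n conjc_real.
by rewrite ?mulr0n conjc0.
Qed.

Lemma DfM f g l : Df f l *m Df g l = Df (fun t => f t * g t) l.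
Proof.
apply/matrixP => i j; rewrite /Df mul_diag_mx !mxE.
case: (eqVneq i j) => [->|ne]; first by rewrite !mulr1n rmorphM.
by rewrite !mulr0n mulr0.
Qed.

Lemma Df_ext f g l : (forall i, f (l 0 i) = g (l 0 i)) -> Df f l = Df g l.
Proof.
by move=> H; apply/matrixP => i j; rewrite /Df !mxE H.
Qed.

Lemma Df1 f l : (forall i, f (l 0 i) = 1) -> Df f l = 1%:M.
Proof.
move=> H; apply/matrixP => i j; rewrite /Df !mxE H.
by case: (i == j).
Qed.

Lemma Df_comp f g l : Df f (map_mx g l) = Df (fun t => f (g t)) l.
Proof. by apply/matrixP => i j; rewrite /Df !mxE. Qed.

Lemma unitary_l {U} : Defs.unitarymx U -> adjmx U *m U = 1%:M.
Proof. by move=> H; apply: mulmx1C. Qed.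

Lemma intertwine f l m W : W *m Df id l = Df id m *m W -> W *m Df f l = Df f m *m W.
Proof.
move=> /matrixP WD; apply/matrixP => i j.
move: (WD i j); rewrite /Df !mul_mx_diag !mul_diag_mx.
rewrite !mxE.
case: (eqVneq (W i j) 0) => [-> _|nz]; first by rewrite mul0r mulr0.
move=> /eqP; rewrite mulrC -subr_eq0 -mulrBl mulf_eq0 (negbTE nz) orbF.
rewrite subr_eq0 => /eqP /complexI ->.
by rewrite mulrC.
Qed.

Lemma spectral_unique P U l V m f :
  pos_spectral P U l -> pos_spectral P V m ->
  U *m Df f l *m adjmx U = V *m Df f m *m adjmx V.
Proof.
move=> [uU [lpos PU]] [uV [mpos PV]].
have uU' := unitary_l uU; have uV' := unitary_l uV.
set W := adjmx V *m U.
have WD : W *m Df id l = Df id m *m W.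
  have : adjmx V *m P *m U = adjmx V *m P *m U by [].
  rewrite {1}PU PV /W /Df.
  rewrite !mulmxA uV' mul1mx -!mulmxA uU' mulmx1.
  by rewrite !mulmxA.
have WF := @intertwine f l m W WD.
transitivity (V *m (W *m Df f l) *m adjmx U).
  by rewrite /W !mulmxA uV mul1mx.
by rewrite WF /W !mulmxA -(mulmxA _ U) uU mulmx1.
Qed.

Lemma mpowE P U l x : pos_spectral P U l ->
  mpow x P = U *m Df (fun t => powR t x) l *m adjmx U.
Proof.
move=> ps; rewrite /mpow; case: pselect => [H|[]]; last by exists (U, l).
case: (cid H) => [[U' l'] ps'] /=.
exact: (spectral_unique (fun t => powR t x) ps' ps).
Qed.

Lemma psE P U l : pos_spectral P U l -> P = U *m Df id l *m adjmx U.
Proof. by case=> _ [_ ->]. Qed.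

Lemma ps_pow P U l x : pos_spectral P U l ->
  pos_spectral (mpow x P) U (map_mx (fun t => powR t x) l).
Proof.
move=> ps; have [uU [lpos _]] := ps; split => //; split.
  by move=> i; rewrite mxE powR_gt0.
by rewrite (mpowE x ps) -[diag_mx _]/(Df id _) Df_comp.
Qed.

Lemma mpowD P U l a b : pos_spectral P U l ->
  mpow a P *m mpow b P = mpow (a + b) P.
Proof.
move=> ps; have [uU [lpos _]] := ps.
rewrite !(mpowE _ ps) !mulmxA -(mulmxA _ (adjmx U)) unitary_l // mulmx1.
rewrite -(mulmxA U) DfM; congr (_ *m _ *m _); apply: Df_ext => i.
by rewrite powRD // (gt_eqF (lpos i)) implybT.
Qed.

Lemma mpow0 P U l : pos_spectral P U l -> mpow 0 P = 1%:M.
Proof.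
move=> ps; have [uU _] := ps.
by rewrite (mpowE _ ps) Df1 ?mulmx1 // => i; rewrite powRr0.
Qed.

Lemma mpow1 P U l : pos_spectral P U l -> mpow 1 P = P.
Proof.
move=> ps; have [uU [lpos _]] := ps.
rewrite (mpowE _ ps) [in RHS](psE ps); congr (_ *m _ *m _); apply: Df_ext => i.
by rewrite powRr1 // ltW.
Qed.

Lemma mpow_inv P U l a : pos_spectral P U l -> invmx (mpow a P) = mpow (- a) P.
Proof.
move=> ps.
have H : mpow a P *m mpow (- a) P = 1%:M by rewrite (mpowD _ _ ps) subrr (mpow0 ps).
have [Hu _] := mulmx1_unit H.
by rewrite -[invmx _]mulmx1 -H mulmxA mulVmx // mul1mx.
Qed.

Lemma mpow_mpow P U l a b : pos_spectral P U l ->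
  mpow b (mpow a P) = mpow (a * b) P.
Proof.
move=> ps; rewrite (mpowE _ (ps_pow a ps)) (mpowE _ ps) Df_comp.
by congr (_ *m _ *m _); apply: Df_ext => i; rewrite powRrM.
Qed.

Lemma adj_mpow P U l a : pos_spectral P U l -> adjmx (mpow a P) = mpow a P.
Proof.
by move=> ps; rewrite (mpowE _ ps) !adjmxM adjmxK adjDf mulmxA.
Qed.

Lemma ps_conj P U l W : pos_spectral P U l -> Defs.unitarymx W ->
  pos_spectral (W *m P *m adjmx W) (W *m U) l.
Proof.
move=> ps uW; have [uU [lpos PU]] := ps; split; last split => //.
  by rewrite /Defs.unitarymx adjmxM mulmxA -(mulmxA W) uU mulmx1 uW.
by rewrite {1}PU adjmxM !mulmxA.
Qed.

Lemma mpow_conj P U l W a : pos_spectral P U l -> Defs.unitarymx W ->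
  mpow a (W *m P *m adjmx W) = W *m mpow a P *m adjmx W.
Proof.
move=> ps uW; rewrite (mpowE _ (ps_conj ps uW)) (mpowE _ ps).
by rewrite adjmxM !mulmxA.
Qed.

Definition qf (v : 'cV[C]_d) (H : 'M[C]_d) : C := ((map_mx conjc v)^T *m H *m v) 0 0.

Lemma norm_pos (w : 'cV[C]_d) : w != 0 -> 0 < ((map_mx conjc w)^T *m w) 0 0.
Proof.
move=> wn0.
have [k wk] : exists k, w k 0 != 0.
  apply/existsP; apply: contraR wn0; rewrite negb_exists => /forallP H.
  by apply/eqP/matrixP => i j; rewrite ord1 mxE; apply/eqP; rewrite -[_ == _]negbK H.
rewrite !mxE.
have ge0 : forall i : 'I_d, true -> 0 <= (map_mx conjc w)^T 0 i * w i 0.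
  by move=> i _; rewrite !mxE mulrC mulcJ_ge0.
rewrite lt_def; apply/andP; split; last by apply: sumr_ge0.
rewrite psumr_neq0 //; apply/hasP; exists k; first by rewrite mem_index_enum.
rewrite /= lt_def !mxE mulf_neq0 ?conjc_eq0 // /=.
by rewrite mulrC mulcJ_ge0.
Qed.

Lemma qf_col U H i : (adjmx U *m H *m U) i i = qf (col i U) H.
Proof.
rewrite /qf !mxE; apply: eq_bigr => k _; rewrite !mxE; congr (_ * _).
by apply: eq_bigr => j _; rewrite !mxE.
Qed.

Lemma exists_ps H : adjmx H = H ->
  (forall v : 'cV[C]_d, v != 0 -> 0 < qf v H) ->
  exists U l, pos_spectral H U l.
Proof.
move=> hH pH.
have E : forall A : 'M[C]_d, (A ^t* )%sesqui = adjmx A.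
  by move=> A; apply/matrixP => i j; rewrite !mxE.
have nH : H \is normalmx by apply/normalmxP; rewrite E hH.
move: nH => /orthomx_spectral_subproof [[P s] /= uP HPs].
have uP' := unitarymxP uP; rewrite E in uP'.
rewrite invmx_unitary // E in HPs.
set U := adjmx P.
have uU : Defs.unitarymx U by apply: mulmx1C; rewrite /U adjmxK.
have uU' : adjmx U *m U = 1%:M by rewrite /U adjmxK.
have sE : forall i, s 0 i = qf (col i U) H.
  move=> i; rewrite -qf_col HPs /U adjmxK !mulmxA uP' mul1mx -mulmxA uP' mulmx1.
  by rewrite mxE eqxx mulr1n.
have spos : forall i, 0 < s 0 i.
  move=> i; rewrite sE; apply: pH; apply/eqP => c0.
  have /matrixP/(_ i 0) := congr1 (mulmx (adjmx U)) c0.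
  rewrite colE mulmxA uU' mul1mx mulmx0 !mxE !eqxx /= => /eqP.
  by rewrite oner_eq0.
exists U, (map_mx (@complex.Re R) s); split => //; split.
  by move=> i; rewrite mxE; have := spos i; rewrite ltcE => /andP[].
rewrite HPs /U adjmxK; congr (_ *m diag_mx _ *m _).
apply/matrixP => i j; rewrite !mxE; rewrite ord1.
have := spos j; rewrite ltcE => /andP[/eqP Im0 _].
by case: (s 0 j) Im0 => a b /= ->.
Qed.

Lemma posdef_ps P : posdef P -> exists U l, pos_spectral P U l.
Proof. by case=> h p; apply: exists_ps. Qed.

Lemma ps_AA A Ai : A *m Ai = 1%:M -> exists U l, pos_spectral (A *m adjmx A) U l.
Proof.
move=> AAi; apply: exists_ps; first by rewrite adjmxM adjmxK.
move=> v vn0.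
have -> : qf v (A *m adjmx A) =
   ((map_mx conjc (adjmx A *m v))^T *m (adjmx A *m v)) 0 0.
  rewrite /qf map_mxM trmx_mul !mulmxA; congr ((_ *m _ *m _) 0 0).
  apply/matrixP => i j; rewrite !mxE; apply: eq_bigr => k _; rewrite !mxE; congr (_ * _); symmetry; apply: conjcK.
have := @norm_pos (adjmx A *m v); apply.
apply/eqP => H; move/eqP: vn0; apply.
have : adjmx Ai *m adjmx A = 1%:M by rewrite -adjmxM AAi adjmx1.
by move=> /(congr1 (mulmx^~ v)); rewrite -mulmxA H mulmx0 mul1mx => ->.
Qed.

Lemma mpowDe P U l a b c : pos_spectral P U l -> a + b = c ->
  mpow a P *m mpow b P = mpow c P.
Proof. by move=> ps <-; apply: mpowD ps. Qed.

Lemma polE A Ai : A *m Ai = 1%:M ->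
  Pol A = mpow (- 2^-1) (A *m adjmx A) *m A.
Proof.
move=> AAi; have [W [s psM]] := ps_AA AAi.
set M := A *m adjmx A in psM *.
set T := mpow (- 2^-1) M *m A.
have hm := fun a => adj_mpow a psM.
have TT : T *m adjmx T = 1%:M.
  rewrite /T adjmxM hm -!mulmxA (mulmxA A) -/M -{2}(mpow1 psM).
  rewrite mulmxA (mpowD _ _ psM) (mpowDe (c:=0) psM) ?(mpow0 psM) //.
  by field.
have uT : Defs.unitarymx (adjmx T) by rewrite /Defs.unitarymx adjmxK; apply: mulmx1C.
have hA : A = mpow (2^-1) M *m T.
  by rewrite /T mulmxA (mpowDe (c:=0) psM) ?(mpow0 psM) ?mul1mx //; by field.
have hAA : adjmx A *m A = adjmx T *m M *m adjmx (adjmx T).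
  have -> : adjmx A *m A = adjmx (mpow (2^-1) M *m T) *m (mpow (2^-1) M *m T) by congr (adjmx _ *m _).
  rewrite adjmxK adjmxM hm mulmxA -(mulmxA (adjmx T)).
  by rewrite (mpowDe (c:=1) psM) ?(mpow1 psM) // half2.
rewrite /Pol hAA (mpow_conj _ psM uT) adjmxK {1}hA.
clearbody T; rewrite -!mulmxA (mulmxA T (adjmx T)) TT mul1mx mulmxA (mpowDe (c:=0) psM) ?(mpow0 psM) ?mul1mx //.
by rewrite subrr.
Qed.

End Aux.


Lemma msqrtE (R : realType) d (P : 'M[complex R]_d) : msqrt P = mpow (2^-1) P.
Proof. by []. Qed.
Local Opaque mpow msqrt.
Section Aux2.
Variables (R : realType) (d : nat).
Local Notation C := (complex R).
Implicit Types (A B U V : 'M[C]_d) (l m : 'rV[R]_d).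


Lemma part1 (P Q : 'M[C]_d) (x : R) : posdef P -> posdef Q ->
  genF (mpow x P) P Q =
     \tr (mpow ((1 - x) / 2) P *m msqrt (mpow (x / 2) P *m Q *m mpow (x / 2) P)) /\
  \tr (msqrt P *m Pol (mpow (x / 2) P *m msqrt Q) *m msqrt Q) =
     \tr (mpow ((1 - x) / 2) P *m msqrt (mpow (x / 2) P *m Q *m mpow (x / 2) P)).
Proof.
move=> /posdef_ps [U [l psP]] /posdef_ps [V [m psQ]].
set a := mpow (x / 2) P; set ai := mpow (- (x / 2)) P.
have aai : a *m ai = 1%:M by rewrite (mpowDe (c:=0) psP) ?(mpow0 psP) // subrr.
have aia : ai *m a = 1%:M by rewrite (mpowDe (c:=0) psP) ?(mpow0 psP) // addrC subrr.
set q := mpow (2^-1) Q; set qi := mpow (- 2^-1) Q.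
have qq : q *m q = Q by rewrite (mpowDe (c:=1) psQ) ?(mpow1 psQ) // half2.
have qqi : q *m qi = 1%:M by rewrite (mpowDe (c:=0) psQ) ?(mpow0 psQ) // subrr.
have sQ : msqrt Q = q by rewrite msqrtE.
have AAi : (a *m q) *m (qi *m ai) = 1%:M.
  by rewrite -(mulmxA a q (qi *m ai)) (mulmxA q qi ai) qqi mul1mx aai.
set M := a *m Q *m a.
have eM : (a *m q) *m adjmx (a *m q) = M.
  by rewrite adjmxM (adj_mpow _ psQ) (adj_mpow _ psP) mulmxA -(mulmxA a q q) qq.
have [W [s psM]] := ps_AA AAi; rewrite eM in psM.
have polA := polE AAi; rewrite eM in polA.
have eQ : Q = ai *m M *m ai.
  by rewrite /M !mulmxA aia mul1mx -mulmxA aai mulmx1.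
have eMM : mpow (- 2^-1) M *m M = mpow (2^-1) M.
  rewrite -{2}(mpow1 psM) (mpowDe (c:=2^-1) psM) //.
  by rewrite -{2}half2 addrA addNr add0r.
have sR : msqrt (mpow x P) = a by rewrite msqrtE (mpow_mpow _ _ psP).
have eR : msqrt (mpow x P) *m P *m msqrt (mpow x P) = mpow (x / 2 + 1 + x / 2) P.
  by rewrite sR /a -{2}(mpow1 psP) !(mpowD _ _ psP).
split.
  rewrite /genF eR sR (mpow_inv _ psP) {1}msqrtE (mpow_mpow _ _ psP).
  by rewrite (mpowDe (c := (1 - x) / 2) psP) //; field.
have hfin : ai *m msqrt P = mpow ((1 - x) / 2) P.
  by rewrite msqrtE (mpowDe (c := (1 - x) / 2) psP) //; field.
rewrite polA sQ; clearbody M a ai q qi.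
rewrite -!mulmxA qq eQ !mulmxA.
rewrite -(mulmxA (msqrt P *m mpow (- 2^-1) M) a ai) aai mulmx1.
by rewrite -(mulmxA (msqrt P)) eMM mxtrace_mulC mulmxA hfin.
Qed.

Lemma part2 (P Q : 'M[C]_d) (x : R) : posdef P -> posdef Q ->
  genF (mpow x Q) P Q =
     \tr (msqrt (mpow (x / 2) Q *m P *m mpow (x / 2) Q) *m mpow ((1 - x) / 2) Q) /\
  \tr (msqrt P *m Pol (msqrt P *m mpow (x / 2) Q) *m msqrt Q) =
     \tr (msqrt (mpow (x / 2) Q *m P *m mpow (x / 2) Q) *m mpow ((1 - x) / 2) Q).
Proof.
move=> /posdef_ps [U [l psP]] /posdef_ps [V [m psQ]].
set b := mpow (x / 2) Q; set bi := mpow (- (x / 2)) Q.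
have bbi : b *m bi = 1%:M by rewrite (mpowDe (c:=0) psQ) ?(mpow0 psQ) // subrr.
have bib : bi *m b = 1%:M by rewrite (mpowDe (c:=0) psQ) ?(mpow0 psQ) // addrC subrr.
set p := mpow (2^-1) P; set pi := mpow (- 2^-1) P.
have pp : p *m p = P by rewrite (mpowDe (c:=1) psP) ?(mpow1 psP) // half2.
have ppi : p *m pi = 1%:M by rewrite (mpowDe (c:=0) psP) ?(mpow0 psP) // subrr.
have sP : msqrt P = p by rewrite msqrtE.
have AAi : (b *m p) *m (pi *m bi) = 1%:M.
  by rewrite -(mulmxA b p (pi *m bi)) (mulmxA p pi bi) ppi mul1mx bbi.
set K := b *m P *m b.
have eK : (b *m p) *m adjmx (b *m p) = K.
  by rewrite adjmxM (adj_mpow _ psQ) (adj_mpow _ psP) mulmxA -(mulmxA b p p) pp.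
have [W [s psK]] := ps_AA AAi; rewrite eK in psK.
have eB : adjmx (p *m b) *m (p *m b) = K.
  by rewrite adjmxM (adj_mpow _ psQ) (adj_mpow _ psP) mulmxA -(mulmxA b p p) pp.
have eP : P = bi *m K *m bi.
  by rewrite /K !mulmxA bib mul1mx -mulmxA bbi mulmx1.
have eKK : K *m mpow (- 2^-1) K = mpow (2^-1) K.
  rewrite -{1}(mpow1 psK) (mpowDe (c:=2^-1) psK) //.
  by rewrite -{1}half2 -addrA subrr addr0.
have sR : msqrt (mpow x Q) = b by rewrite msqrtE (mpow_mpow _ _ psQ).
have eR : msqrt (mpow x Q) *m Q *m msqrt (mpow x Q) = mpow (x / 2 + 1 + x / 2) Q.
  by rewrite sR /b -{2}(mpow1 psQ) !(mpowD _ _ psQ).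
split.
  rewrite /genF eR sR (mpow_inv _ psQ) (msqrtE (mpow _ Q)) (mpow_mpow _ _ psQ).
  by rewrite -mulmxA (mpowDe (c := (1 - x) / 2) psQ) //; field.
have hfin : msqrt Q *m bi = mpow ((1 - x) / 2) Q.
  by rewrite msqrtE (mpowDe (c := (1 - x) / 2) psQ) //; field.
rewrite /Pol eB sP; clearbody K b bi p pi.
rewrite -!mulmxA (mulmxA p p) pp eP -!mulmxA.
by rewrite (mulmxA bi b) bib mul1mx (mulmxA K) eKK mxtrace_mulC -!mulmxA hfin.
Qed.
End Aux2.
Unset Implicit Arguments.

Unset Implicit Arguments.

Theorem mainTheorem10 (R : realType) (d : nat) (P Q : 'M[complex R]_d) (x : R) :
  posdef P -> posdef Q ->
  let Ux := Pol (mpow (x / 2) P *m msqrt Q) in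
  let Vx := Pol (msqrt P *m mpow (x / 2) Q) in
  (genF (mpow x P) P Q = \tr (msqrt P *m Ux *m msqrt Q) /\
   \tr (msqrt P *m Ux *m msqrt Q) =
     \tr (mpow ((1 - x) / 2) P *m msqrt (mpow (x / 2) P *m Q *m mpow (x / 2) P)))
  /\
  (genF (mpow x Q) P Q = \tr (msqrt P *m Vx *m msqrt Q) /\
   \tr (msqrt P *m Vx *m msqrt Q) =
     \tr (msqrt (mpow (x / 2) Q *m P *m mpow (x / 2) Q) *m mpow ((1 - x) / 2) Q)).
Proof.
move=> pP pQ Ux Vx.
have [h1 h2] := part1 x pP pQ.
have [h3 h4] := part2 x pP pQ.
rewrite /Ux /Vx.
split; split.
- exact: (etrans h1 (esym h2)).
- exact: h2.
- exact: (etrans h3 (esym h4)).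
- exact: h4.
Qed.
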